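(* Let $a,b\ge1$ and let $X(a,b)$ be the digraph with vertex set $\{x_1,\dots,x_a\}\cup\{y_1,\dots,y_a\}\cup\{z_1,\dots,z_b\}$ and arc set $\{x_jy_j,\,y_jx_j: 1\le j\le a\}\cup\{x_jz_\ell,\, z_\ell y_j: 1\le j\le a,\ 1\le \ell\le b\}$. Then the eigenvalues of $H(X(a,b))$ are $$\frac{-1+\sqrt{1+8ab}}{2},\quad 1^{(a)},\quad 0^{(b-1)},\quad (-1)^{(a-1)},\quad \frac{-1-\sqrt{1+8ab}}{2},$$ where superscripts denote multiplicities.
   Context: For a digraph $X$ (finite vertex set, arcs are ordered pairs of distinct vertices), the Hermitian adjacency matrix $H(X)$ has $(u,v)$-entry $1$ if $uv$ and $vu$ are arcs, $i$ if only $uv$ is an arc, $-i$ if only $vu$ is an arc, and $0$ otherwise. *)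

(* Defs.v *)
From HB Require Import structures.
From mathcomp Require Import all_boot all_order all_algebra all_field.
Set Implicit Arguments. Unset Strict Implicit. Unset Printing Implicit Defensive.
Import Order.TTheory GRing.Theory Num.Theory.
Local Open Scope ring_scope.

Definition herm_adj (T : finType) (arc : rel T) : 'M[algC]_#|T| :=
  \matrix_(i, j)
    let u := enum_val i in let v := enum_val j in
    if arc u v && arc v u then 1
    else if arc u v then 'i
    else if arc v u then - 'i
    else 0.

(* Vertex type of X(a,b): inl (inl j) = x_j, inl (inr j) = y_j, inr l = z_l. *)
Definition Xab_vert (a b : nat) : finType := ('I_a + 'I_a + 'I_b)%type.

Definition Xab_arc (a b : nat) : rel (Xab_vert a b) :=
  fun u v =>
    match u, v with
    | inl (inl j), inl (inr j') => j == j'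
    | inl (inr j), inl (inl j') => j == j'
    | inl (inl _), inr _ => true
    | inr _, inl (inr _) => true
    | _, _ => false
    end.

(* Main.v *)
From HB Require Import structures.
From mathcomp Require Import all_boot all_order all_algebra all_field.
Require Import Defs.
Set Implicit Arguments. Unset Strict Implicit. Unset Printing Implicit Defensive.
Import Order.TTheory GRing.Theory Num.Theory.
From mathcomp Require Import ring.
Local Open Scope ring_scope.
Lemma char_poly_sim n (P A : 'M[algC]_n) (dd : 'rV_n) : \det P != 0 ->
  P *m A = diag_mx dd *m P -> char_poly A = \prod_(i < n) ('X - (dd 0 i)%:P).
Proof.
move=> dP PA.
have E : map_mx polyC P *m char_poly_mx A
       = char_poly_mx (diag_mx dd) *m map_mx polyC P.
  rewrite /char_poly_mx mulmxBr mulmxBl mul_mx_scalar mul_scalar_mx.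
  by rewrite -!map_mxM PA.
have := congr1 determinant E; rewrite !det_mulmx -/(char_poly A) -/(char_poly _).
rewrite mulrC => /mulIf -> .
- rewrite char_poly_trig ?diag_mx_is_trig //.
  by apply: eq_bigr => i _; rewrite mxE eqxx.
- by rewrite det_map_mx polyC_eq0.
Qed.

Lemma sum_enum (T : finType) (F : T -> algC) :
  \sum_(i < #|T|) F (enum_val i) = \sum_t F t.
Proof. by rewrite (big_enum_val (A := T)). Qed.

Lemma prod_enum (T : finType) (F : T -> {poly algC}) :
  \prod_(i < #|T|) F (enum_val i) = \prod_t F t.
Proof. by rewrite (big_enum_val (A := T)). Qed.
Section K.
Variables (a b : nat) (j0 : 'I_a) (l0 : 'I_b) (lp lm : algC).
Local Notation T := (Xab_vert a b).

Definition hk (s t : T) : algC := match s, t with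
| inl (inl k), inl (inr j) => (k == j)%:R
| inl (inr k), inl (inl j) => (k == j)%:R
| inl (inl _), inr _ => 'i
| inr _, inl (inl _) => -'i
| inl (inr _), inr _ => -'i
| inr _, inl (inr _) => 'i
| _, _ => 0 end.

Lemma herm_hk : herm_adj (@Xab_arc a b) = \matrix_(i, j) hk (enum_val i) (enum_val j).
Proof.
apply/matrixP => i j; rewrite !mxE.
case: (enum_val i) => [[k|k]|k]; case: (enum_val j) => [[m|m]|m] //=;
  rewrite ?(eq_sym m k); case: eqP => //=.
Qed.

Definition za : algC := 2 * 'i * a%:R.
Definition rr (l : algC) (s : T) : algC := match s with
 | inl (inl _) => l | inl (inr _) => - l | inr _ => za end.

Definition Pk (c s : T) : algC := match c with
| inl (inl j) => match s with inl (inl k) | inl (inr k) => (k == j)%:R | inr _ => 0 end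
| inl (inr j) => (j == j0)%:R * rr lp s
   + match s with inl (inl k) => (k == j)%:R - (k == j0)%:R
        | inl (inr k) => (k == j0)%:R - (k == j)%:R | inr _ => 0 end
| inr l => (l == l0)%:R * rr lm s
   + match s with inr m => (m == l)%:R - (m == l0)%:R | _ => 0 end
end.

Definition dk (c : T) : algC := match c with
| inl (inl _) => 1
| inl (inr j) => if j == j0 then lp else -1
| inr l => if l == l0 then lm else 0 end.

Lemma sdl (I : finType) (j : I) (F : I -> algC) : \sum_k (k == j)%:R * F k = F j.
Proof.
rewrite (bigD1 j) //= eqxx mul1r big1 ?addr0 // => k /negPf ->; by rewrite mul0r.
Qed.
Lemma sdr (I : finType) (j : I) (F : I -> algC) : \sum_k F k * (k == j)%:R = F j.
Proof. rewrite -(sdl j F); apply: eq_bigr => k _; by rewrite mulrC. Qed.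


Lemma t1 : true%:R = 1 :> algC. Proof. by []. Qed.
Lemma f0 : false%:R = 0 :> algC. Proof. by []. Qed.
Lemma s0l (I : finType) (F : I -> algC) : \sum_i 0 * F i = 0.
Proof. by rewrite big1 // => i _; rewrite mul0r. Qed.
Lemma s0r (I : finType) (F : I -> algC) : \sum_i F i * 0 = 0.
Proof. by rewrite big1 // => i _; rewrite mulr0. Qed.

Lemma sDr (I : finType) (F G H : I -> algC) :
  \sum_i (F i + G i) * H i = \sum_i F i * H i + \sum_i G i * H i.
Proof. by rewrite -big_split; apply: eq_bigr => i _; rewrite mulrDl. Qed.
Lemma sBr (I : finType) (F G H : I -> algC) :
  \sum_i (F i - G i) * H i = \sum_i F i * H i - \sum_i G i * H i.
Proof. by rewrite -sumrB; apply: eq_bigr => i _; rewrite mulrBl. Qed.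

Lemma sNr (I : finType) (F H : I -> algC) :
  \sum_i (- F i) * H i = - \sum_i F i * H i.
Proof. by rewrite -sumrN; apply: eq_bigr => i _; rewrite mulNr. Qed.

Ltac simpeq := rewrite ?eqxx; repeat match goal with
  H : (?x == ?y) = false |- _ => progress rewrite ?H ?(etrans (eq_sym y x) H) end; rewrite ?t1 ?f0.
Ltac cleanup := rewrite ?s0l ?s0r ?subrr ?mulr1 ?mul1r ?mulr0 ?mul0r ?addr0 ?add0r ?subr0 ?sub0r ?mul0rn ?big1_eq.

Hypothesis hp : lp ^+ 2 = 2 * (a%:R * b%:R) - lp.
Hypothesis hm : lm ^+ 2 = 2 * (a%:R * b%:R) - lm.

Lemma eigen (c t : T) : \sum_s Pk c s * hk s t = dk c * Pk c t.
Proof.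
have hi : 'i ^+ 2 = -1 :> algC by rewrite sqrCi.
rewrite big_sumType big_sumType /=.
case: c => [[j|j]|l]; case: t => [[k|k]|k] /=.
all: try (case: (eqVneq j j0) => [->|/negPf ?]).
all: try (case: (eqVneq l l0) => [->|/negPf ?]).
all: try (case: (eqVneq k j) => [->|/negPf ?]).
all: try (case: (eqVneq k j0) => [->|/negPf ?]).
all: try (case: (eqVneq k l) => [->|/negPf ?]).
all: try (case: (eqVneq k l0) => [->|/negPf ?]).

all: simpeq; cleanup.
all: rewrite ?sDr ?sBr ?sNr.
all: rewrite ?sdl ?sdr ?sumr_const ?card_ord.
all: simpeq; cleanup.
all: try by rewrite eq_sym.
all: rewrite ?eqxx ?[j0 == _]eq_sym ?[l0 == _]eq_sym.
all: rewrite /za; ring: hp hm hi.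
Qed.

Lemma sdl' (I : finType) (j : I) (F : I -> algC) : \sum_k (j == k)%:R * F k = F j.
Proof. rewrite -(sdl j F); apply: eq_bigr => k _; by rewrite eq_sym. Qed.
Lemma sdr' (I : finType) (j : I) (F : I -> algC) : \sum_k F k * (j == k)%:R = F j.
Proof. rewrite -(sdr j F); apply: eq_bigr => k _; by rewrite eq_sym. Qed.
Lemma sDl (I : finType) (F G H : I -> algC) :
  \sum_i H i * (F i + G i) = \sum_i H i * F i + \sum_i H i * G i.
Proof. by rewrite -big_split; apply: eq_bigr => i _; rewrite mulrDr. Qed.
Lemma sNl (I : finType) (F H : I -> algC) :
  \sum_i H i * (- F i) = - \sum_i H i * F i.
Proof. by rewrite -sumrN; apply: eq_bigr => i _; rewrite mulrN. Qed.
Lemma sdm (I : finType) (p : I) (c : algC) (F : I -> algC) :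
  \sum_i F i * ((i == p)%:R * c) = F p * c.
Proof. by rewrite -(sdr p (fun i => F i * c)); apply: eq_bigr => i _; rewrite mulrA mulrAC. Qed.
Lemma sc (I : finType) (c : algC) (F : I -> algC) :
  \sum_i F i * c = (\sum_i F i) * c.
Proof. by rewrite mulr_suml. Qed.

Variable w : T -> algC.
Let X j := w (inl (inl j)).
Let Y j := w (inl (inr j)).
Let Z l := w (inr l).
Let SY := \sum_j Y j.
Let SZ := \sum_l Z l.

Ltac norm := rewrite big_sumType big_sumType /=;
  rewrite ?mulr0 ?s0r ?addr0 ?add0r ?sDl ?sNl ?sdm ?sdr ?sdr' ?sc ?mulr0 ?s0r ?addr0 ?add0r.

Lemma Ex k : \sum_c w c * Pk c (inl (inl k)) = X k + Y j0 * lp + Y k - (k == j0)%:R * SY + Z l0 * lm.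
Proof. norm; rewrite /X /Y /Z /SY /SZ; ring. Qed.
Lemma Ey k : \sum_c w c * Pk c (inl (inr k)) = X k - Y j0 * lp - Y k + (k == j0)%:R * SY - Z l0 * lm.
Proof. norm; rewrite /X /Y /Z /SY /SZ; ring. Qed.
Lemma Ez m : \sum_c w c * Pk c (inr m) = Y j0 * za + Z l0 * za + Z m - (m == l0)%:R * SZ.
Proof. norm; rewrite /X /Y /Z /SY /SZ; ring. Qed.

Hypothesis hw : forall t, \sum_c w c * Pk c t = 0.
Hypothesis lpm : lp != lm.

Lemma s1 (I : finType) (p : I) : \sum_i (i == p)%:R = 1 :> algC.
Proof. by rewrite -[RHS](sdr p (fun _ => 1)); apply: eq_bigr => i _; rewrite mul1r. Qed.

Lemma lc (x y z c d : algC) : x = 0 -> y = 0 -> z = c * x + d * y -> z = 0.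
Proof. by move=> -> -> ->; rewrite !mulr0 addr0. Qed.

Lemma w0 c : w c = 0.
Proof.
have two : (2 : algC) != 0 by rewrite pnatr_eq0.
have a0 : a%:R != 0 :> algC by rewrite pnatr_eq0 -lt0n (leq_ltn_trans _ (ltn_ord j0)).
have b0 : b%:R != 0 :> algC by rewrite pnatr_eq0 -lt0n (leq_ltn_trans _ (ltn_ord l0)).
have iz : 'i != 0 :> algC by rewrite neq0Ci.
have hX k : X k = 0.
  move: (hw (inl (inl k))) (hw (inl (inr k))); rewrite Ex Ey => e1 e2.
  apply: (lc e1 e2 (c := 1/2) (d := 1/2)); by field.
have hD k : Y j0 * lp + Y k - (k == j0)%:R * SY + Z l0 * lm = 0.
  move: (hw (inl (inl k))) (hw (inl (inr k))); rewrite Ex Ey => e1 e2.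
  apply: (lc e1 e2 (c := 1/2) (d := -1/2)); by field.
have hA : Y j0 * lp + Z l0 * lm = 0.
  have hs : \sum_k (Y j0 * lp + Y k - (k == j0)%:R * SY + Z l0 * lm) = 0.
    by rewrite big1 // => k _; rewrite hD.
  rewrite (eq_bigr (fun k => (Y j0 * lp + Z l0 * lm) + Y k - (k == j0)%:R * SY)) in hs;
    last by move=> k _; ring.
  rewrite sumrB big_split /= sumr_const card_ord sc s1 in hs.
  rewrite -/SY mul1r addrK -mulr_natr in hs.
  by move/eqP: hs; rewrite mulf_eq0 (negPf a0) orbF => /eqP.
have hYk k : k != j0 -> Y k = 0.
  by move=> kj; move: (hD k); rewrite (negPf kj) mul0r subr0 addrAC hA add0r.
have hz m : Y j0 * za + Z l0 * za + Z m - (m == l0)%:R * SZ = 0 by rewrite -Ez hw.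
have hB : Y j0 + Z l0 = 0.
  have hs : \sum_m (Y j0 * za + Z l0 * za + Z m - (m == l0)%:R * SZ) = 0.
    by rewrite big1 // => m _; rewrite hz.
  rewrite (eq_bigr (fun m => ((Y j0 + Z l0) * za) + Z m - (m == l0)%:R * SZ)) in hs;
    last by move=> m _; ring.
  rewrite sumrB big_split /= sumr_const card_ord sc s1 in hs.
  rewrite -/SZ mul1r addrK -mulr_natr in hs.
  move/eqP: hs; rewrite /za !mulf_eq0 (negPf b0) (negPf two) (negPf iz) (negPf a0) /= !orbF.
  by move/eqP.
have hY0 : Y j0 = 0.
  have : Y j0 * (lp - lm) = 0.
    apply: (lc hA hB (c := 1) (d := - lm)); ring.
  by move/eqP; rewrite mulf_eq0 subr_eq0 (negPf lpm) orbF => /eqP.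
have hZ0 : Z l0 = 0 by move: hB; rewrite hY0 add0r.
case: c => [[j|j]|m]; first exact: hX.
  by case: (eqVneq j j0) => [->|/hYk]; [exact: hY0|].
case: (eqVneq m l0) => [->|ml]; first exact: hZ0.
move: (hz m); rewrite hY0 hZ0 (negPf ml) !mul0r !add0r subr0; exact.
Qed.
End K.

Unset Implicit Arguments.
Theorem lemma5p3 (a b : nat) (ha : (1 <= a)%N) (hb : (1 <= b)%N) :
  char_poly (herm_adj (@Xab_arc a b)) =
    ('X - ((-1 + sqrtC (1 + 8 * (a * b)%:R)) / 2)%:P)
    * ('X - 1) ^+ a
    * 'X ^+ (b - 1)
    * ('X + 1) ^+ (a - 1)
    * ('X - ((-1 - sqrtC (1 + 8 * (a * b)%:R)) / 2)%:P).
Proof.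
set s := sqrtC _.
set lp := (-1 + s) / 2.
set lm := (-1 - s) / 2.
pose j0 : 'I_a := Ordinal ha.
pose l0 : 'I_b := Ordinal hb.
have hs : s ^+ 2 = 1 + 8 * (a%:R * b%:R) by rewrite sqrtCK natrM.
have two : (2 : algC) != 0 by rewrite pnatr_eq0.
have hp : lp ^+ 2 = 2 * (a%:R * b%:R) - lp.
  by rewrite /lp; field: hs.
have hm : lm ^+ 2 = 2 * (a%:R * b%:R) - lm.
  by rewrite /lm; field: hs.
have lpm : lp != lm.
  apply/negP => /eqP e.
  have s0 : s = 0.
    have : s = lp - lm by rewrite /lp /lm; field.
    by rewrite e subrr.
  move: hs; rewrite s0 expr0n /= => /eqP; rewrite eq_sym.
  have -> : 1 + 8 * (a%:R * b%:R) = (1 + 8 * (a * b))%:R :> algC by rewrite natrD natrM natrM.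
  by rewrite pnatr_eq0.
pose Pm : 'M[algC]_#|Xab_vert a b| := \matrix_(i, j) Pk j0 l0 lp lm (enum_val i) (enum_val j).
pose dr : 'rV[algC]_#|Xab_vert a b| := \row_i dk j0 l0 lp lm (enum_val i).
have PH : Pm *m herm_adj (@Xab_arc a b) = diag_mx dr *m Pm.
  rewrite herm_hk mul_diag_mx; apply/matrixP => i j; rewrite !mxE.
  rewrite (eq_bigr (fun k => Pk j0 l0 lp lm (enum_val i) (enum_val k) *
                             hk (enum_val k) (enum_val j))); last by move=> k _; rewrite !mxE.
  rewrite (sum_enum (fun t => Pk j0 l0 lp lm (enum_val i) t * hk t (enum_val j))).
  exact: (eigen j0 l0 hp hm).
have dP : \det Pm != 0.
  apply/negP => /det0P [v vnz vP].
  pose w (c : Xab_vert a b) := v ord0 (enum_rank c).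
  have hw t : \sum_c w c * Pk j0 l0 lp lm c t = 0.
    have := congr1 (fun M : 'rV[algC]_#|Xab_vert a b| => M ord0 (enum_rank t)) vP; rewrite !mxE => e; apply: etrans e.
    rewrite -(sum_enum (fun c => w c * Pk j0 l0 lp lm c t)).
    apply: eq_bigr => i _; rewrite !mxE /w enum_valK enum_rankK //.
  move/negP: vnz; apply; apply/eqP/rowP => i; rewrite !mxE.
  rewrite -[i]enum_valK.
  exact: (w0 hw lpm).
rewrite (char_poly_sim dP PH).
rewrite (eq_bigr (fun i => 'X - (dk j0 l0 lp lm (enum_val i))%:P)); last by move=> i _; rewrite mxE.
rewrite (prod_enum (fun t => 'X - (dk j0 l0 lp lm t)%:P)).
rewrite big_sumType big_sumType /=.
rewrite polyC1 prodr_const card_ord.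
rewrite (bigD1 j0) // (bigD1 l0) // !eqxx.
rewrite (eq_bigr (fun _ => 'X + 1) (P := fun i => i != j0)); last first.
  by move=> i /negPf ->; rewrite polyCN opprK.
rewrite (eq_bigr (fun _ => 'X) (P := fun i => i != l0)); last first.
  by move=> i /negPf ->; rewrite subr0.
rewrite !prodr_const.
have cA : #|(fun i : 'I_a => i != j0)| = (a - 1)%N.
  by have := cardC1 j0; rewrite card_ord subn1 => <-; apply: eq_card.
have cB : #|(fun i : 'I_b => i != l0)| = (b - 1)%N.
  by have := cardC1 l0; rewrite card_ord subn1 => <-; apply: eq_card.
rewrite cA cB /=.
ring.
Qed.
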